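(* Let $k\geq 2$ and let $T_0,T_1,\dots,T_{k-1}$ be subtrees of a rooted arc-weighted tree $T$, with $T_k:=T_0$, such that $T_i$ does not overshadow $T_{i+1}$ for every $i=0,\dots,k-1$. Then the collection $\{T_1,\dots,T_k\}$ is not compatible, i.e., there are two trees in it neither of which overshadows the other.
   Context: $T$ is a rooted tree whose arcs carry positive integer weights; the depth of a node is the sum of arc weights on its path to the root. A subtree is a connected node set of $T$. For subtrees $T_1,T_2$, $T_1$ overshadows $T_2$ if every node of $T_2\setminus T_1$ has depth strictly greater than every node of $T_2\cap T_1$. Two subtrees are compatible if one overshadows the other; a collection is compatible if every two of its members are compatible. *)

(* Defs.v *)
From mathcomp Require Import all_boot.
Set Implicit Arguments. Unset Strict Implicit. Unset Printing Implicit Defensive.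

(* A rooted arc-weighted tree on the finite node type V:
   root r, parent map par (arc v -> par v for v <> r), arc weight w v of
   the arc from v to its parent. *)
Definition rooted_weighted_tree (V : finType) (r : V) (par : V -> V)
    (w : V -> nat) : Prop :=
  [/\ par r = r,
      (forall v : V, exists n, iter n par v = r) &
      (forall v : V, v != r -> 0 < w v)].

(* depth of v = sum of the arc weights on the path from v to the root;
   the path has fewer than #|V| arcs, and iter i par v stays at r after
   reaching it. *)
Definition depth (V : finType) (r : V) (par : V -> V) (w : V -> nat) (v : V)
  : nat :=
  \sum_(i < #|V|) (if iter i par v != r then w (iter i par v) else 0).

Definition tree_adj (V : finType) (r : V) (par : V -> V) : rel V :=
  fun x y => ((x != r) && (par x == y)) || ((y != r) && (par y == x)).

Definition subtree (V : finType) (r : V) (par : V -> V) (S : {set V}) : Prop :=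
  S != set0 /\
  forall x y, x \in S -> y \in S ->
    connect [rel a b | [&& a \in S, b \in S & tree_adj r par a b]] x y.

Definition overshadows (V : finType) (r : V) (par : V -> V) (w : V -> nat)
    (T1 T2 : {set V}) : Prop :=
  forall x y, x \in T2 :\: T1 -> y \in T2 :&: T1 ->
    depth r par w y < depth r par w x.

Definition compatible (V : finType) (r : V) (par : V -> V) (w : V -> nat)
    (T1 T2 : {set V}) : Prop :=
  overshadows r par w T1 T2 \/ overshadows r par w T2 T1.

Definition compatible_collection (V : finType) (r : V) (par : V -> V)
    (w : V -> nat) (I : Type) (T : I -> {set V}) : Prop :=
  forall i j, compatible r par w (T i) (T j).

(* Main.v *)
Require Import Defs.
From mathcomp Require Import all_boot.
From Stdlib Require Import Classical.
Set Implicit Arguments. Unset Strict Implicit.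

Definition lexlt (f g : nat -> nat) :=
  exists t, (forall s, s < t -> f s = g s) /\ f t < g t.

Lemma lexlt_trans f g h : lexlt f g -> lexlt g h -> lexlt f h.
Proof.
move=> [t1 [E1 L1]] [t2 [E2 L2]].
case: (ltngtP t1 t2) => [lt|lt|eq].
- exists t1; split; first by move=> s hs; rewrite E1 // E2 // (ltn_trans hs lt).
  by rewrite -(E2 _ lt).
- exists t2; split; first by move=> s hs; rewrite E1 ?(ltn_trans hs lt) // E2.
  by rewrite (E1 _ lt).
- subst t2; exists t1; split; first by move=> s hs; rewrite E1 // E2.
  exact: ltn_trans L1 L2.
Qed.

Lemma lexlt_irr f : ~ lexlt f f.
Proof. by move=> [t [_ L]]; rewrite ltnn in L. Qed.

Definition cnt (V : finType) (d : V -> nat) (S : {set V}) (t : nat) :=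
  #|[set v in S | d v <= t]|.

Lemma key (V : finType) (d : V -> nat) (A B : {set V}) :
  (forall x y, x \in A :\: B -> y \in A :&: B -> d y < d x) ->
  (exists x y, [/\ x \in B :\: A, y \in B :&: A & d x <= d y]) ->
  lexlt (cnt d A) (cnt d B).
Proof.
move=> H1 [x [y [Hx Hy Hxy]]].
have sub : forall t, t <= d y ->
    [set v in A | d v <= t] \subset [set v in B | d v <= t].
  move=> t ht; apply/subsetP => v; rewrite !inE => /andP [vA vt].
  rewrite vt andbT; apply/negPn/negP => vB.
  have := H1 v y; rewrite !inE vA vB.
  move: Hy; rewrite !inE => /andP [-> ->] /(_ erefl erefl).
  by rewrite ltnNge (leq_trans vt ht).
have le : forall t, t <= d y -> cnt d A t <= cnt d B t.
  by move=> t ht; apply: subset_leq_card; apply: sub.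
have neqx : cnt d A (d x) != cnt d B (d x).
  rewrite neq_ltn; apply/orP; left.
  apply: proper_card; rewrite properE sub //=.
  apply/subsetPn; exists x; first by rewrite !inE leqnn andbT; case/setDP: Hx.
  by rewrite !inE leqnn andbT; case/setDP: Hx.
have ex : exists t, cnt d A t != cnt d B t by exists (d x).
have mx : (d x) >= ex_minn ex.
  by case: (ex_minnP ex) => m _ /(_ (d x) neqx).
case: (ex_minnP ex) mx => m Hm Hmin mx.
exists m; split.
  move=> s hs; apply/eqP; apply/negPn/negP => hne.
  by have := Hmin s hne; rewrite leqNgt hs.
by rewrite ltn_neqAle Hm le // (leq_trans mx Hxy).
Qed.

Theorem lemma3 (V : finType) (r : V) (par : V -> V) (w : V -> nat)
  (k : nat) (T : 'I_k -> {set V}) :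
  rooted_weighted_tree r par w ->
  2 <= k ->
  (forall i, subtree r par (T i)) ->
  (forall i : 'I_k, ~ overshadows r par w (T i) (T (ordS i))) ->
  ~ compatible_collection r par w T.
Proof.
move=> _ hk _ Hno Hcomp.
set d := depth r par w.
have step : forall i : 'I_k, lexlt (cnt d (T i)) (cnt d (T (ordS i))).
  move=> i; apply: key.
    by case: (Hcomp i (ordS i)) => // h; exfalso; apply: (Hno i).
  apply: NNPP => N; apply: (Hno i) => x y hx hy.
  rewrite ltnNge; apply/negP => le; apply: N; exists x, y; split => //.
case: k hk T Hno Hcomp step => // k hk T _ _ step.
set F := fun n : nat => cnt d (T (inord n)).
have chain : forall n, n.+1 < k.+1 -> lexlt (F 0) (F n.+1).
  elim=> [|n IH] hn.
    have := step ord0; rewrite /F.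
    have -> : ordS (ord0 : 'I_k.+1) = inord 1.
      by apply: val_inj; rewrite /= inordK // modn_small.
    by rewrite (_ : inord 0 = ord0) //; apply: val_inj; rewrite /= inordK.
  apply: lexlt_trans (IH (ltnW hn)) _.
  have := step (inord n.+1); rewrite /F.
  have -> // : ordS (inord n.+1 : 'I_k.+1) = inord n.+2.
  by apply: val_inj; rewrite /= !inordK ?modn_small // ltnW.
have := chain k.-1; rewrite prednK ?(ltnW hk) // ltnSn => /(_ erefl) h.
apply: (@lexlt_irr (F 0)); apply: lexlt_trans h _.
have := step (inord k); rewrite /F.
have -> // : ordS (inord k : 'I_k.+1) = inord 0.
by apply: val_inj; rewrite /= !inordK ?modnn.
Qed.
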